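(* Let $G=Q_8=\langle i,j\mid i^4=j^4=j^{-1}iji=1,\ i^2=j^2\rangle$ and let $m\ge 3$. Let $\Delta$ be the graph with vertex set $G\times\{0,\dots,m-1\}$ (write $g_\ell=(g,\ell)$, $G_\ell=G\times\{\ell\}$) with the following edges: inside $G_0$, $\{g_0,(rg)_0\}$ for $r\in\{i,i^2,i^3\}$; inside $G_\ell$ for $\ell\in\{1,\dots,m-3\}$, $\{g_\ell,(i^2g)_\ell\}$; no edges inside $G_{m-2}$; inside $G_{m-1}$, $\{g_{m-1},(rg)_{m-1}\}$ for $r\in\{j,j^{-1}\}$; for $\ell\in\{0,\dots,m-3\}$ and $g\in G$, $g_\ell$ is adjacent to $g_{\ell+1}$ and to $(ig)_{\ell+1}$; for $g\in G$, $g_{m-2}$ is adjacent to $g_{m-1}$, $(ig)_{m-1}$ and $(jg)_{m-1}$; there are no other edges. Then, identifying $g\in G$ with the permutation $y_\ell\mapsto(yg)_\ell$, $\mathrm{Aut}(\Delta)=G$. Consequently $Q_8$ admits an $m$-GRR for every $m\ge 3$.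
   Context: An $m$-GRR for a group $G$ is a finite regular simple graph having a semiregular group of automorphisms isomorphic to $G$ with exactly $m$ vertex-orbits and whose full automorphism group is isomorphic to $G$. *)

(* Defs.v *)
From HB Require Import structures.
From mathcomp Require Import all_boot all_fingroup.
Set Implicit Arguments. Unset Strict Implicit. Unset Printing Implicit Defensive.

Inductive q8 := P1 | N1 | Pi | Ni | Pj | Nj | Pk | Nk.

Definition q8_enc (x : q8) : bool * (bool * bool) :=
  match x with
  | P1 => (false, (false, false)) | N1 => (true, (false, false))
  | Pi => (false, (false, true))  | Ni => (true, (false, true))
  | Pj => (false, (true, false))  | Nj => (true, (true, false))
  | Pk => (false, (true, true))   | Nk => (true, (true, true))
  end.
Definition q8_dec (c : bool * (bool * bool)) : q8 :=
  match c with
  | (false, (false, false)) => P1 | (true, (false, false)) => N1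
  | (false, (false, true)) => Pi  | (true, (false, true)) => Ni
  | (false, (true, false)) => Pj  | (true, (true, false)) => Nj
  | (false, (true, true)) => Pk   | (true, (true, true)) => Nk
  end.
Lemma q8_encK : cancel q8_enc q8_dec. Proof. by case. Qed.
HB.instance Definition _ := Equality.copy q8 (can_type q8_encK).
HB.instance Definition _ := Choice.copy q8 (can_type q8_encK).
HB.instance Definition _ := Countable.copy q8 (can_type q8_encK).
HB.instance Definition _ := Finite.copy q8 (can_type q8_encK).

Definition q8_neg (x : q8) : q8 :=
  match x with
  | P1 => N1 | N1 => P1 | Pi => Ni | Ni => Pi
  | Pj => Nj | Nj => Pj | Pk => Nk | Nk => Pk
  end.

(* product of the positive units 1,i,j,k *)
Definition q8_mul_pos (x y : q8) : q8 :=
  match x, y with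
  | P1, y => y
  | x, P1 => x
  | Pi, Pi => N1 | Pi, Pj => Pk | Pi, Pk => Nj
  | Pj, Pi => Nk | Pj, Pj => N1 | Pj, Pk => Pi
  | Pk, Pi => Pj | Pk, Pj => Ni | Pk, Pk => N1
  | _, _ => P1 (* unreachable *)
  end.

Definition q8_abs (x : q8) : q8 :=
  match x with
  | P1 | N1 => P1 | Pi | Ni => Pi | Pj | Nj => Pj | Pk | Nk => Pk
  end.
Definition q8_isneg (x : q8) : bool :=
  match x with N1 | Ni | Nj | Nk => true | _ => false end.

Definition q8_mul (x y : q8) : q8 :=
  let z := q8_mul_pos (q8_abs x) (q8_abs y) in
  if q8_isneg x (+) q8_isneg y then q8_neg z else z.

Definition q8_inv (x : q8) : q8 :=
  match x with
  | P1 => P1 | N1 => N1 | Pi => Ni | Ni => Pi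
  | Pj => Nj | Nj => Pj | Pk => Nk | Nk => Pk
  end.

Lemma q8_mulA : associative q8_mul.
Proof. by do 3!case. Qed.
Lemma q8_mul1 : left_id P1 q8_mul.
Proof. by case. Qed.
Lemma q8_mulV : left_inverse P1 q8_inv q8_mul.
Proof. by case. Qed.

HB.instance Definition _ := Finite_isGroup.Build q8 q8_mulA q8_mul1 q8_mulV.

Local Open Scope group_scope.

Definition qi : q8 := Pi.
Definition qj : q8 := Pj.

(* A directed "arc" relation lists each edge (once or more); adjacency is   *)
(* its symmetrization.                                                      *)
Definition Delta_arc (m : nat) (x y : q8 * 'I_m) : bool :=
  let g := x.1 in let a := val x.2 in
  let h := y.1 in let b := val y.2 in
  [|| [&& a == 0, b == 0 & h \in [:: qi * g; qi ^+ 2 * g; qi ^+ 3 * g]],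
      [&& 1 <= a, a <= m - 3, b == a & h == qi ^+ 2 * g],
      [&& a == m - 1, b == m - 1 & h \in [:: qj * g; qj^-1 * g]],
      [&& a <= m - 3, b == a.+1 & h \in [:: g; qi * g]]
    | [&& a == m - 2, b == m - 1 & h \in [:: g; qi * g; qj * g]] ].

Definition Delta_adj (m : nat) : rel (q8 * 'I_m) :=
  fun x y => Delta_arc x y || Delta_arc y x.

Definition Aut_graph (V : finType) (e : rel V) : {set {perm V}} :=
  [set p : {perm V} | [forall x, forall y, e (p x) (p y) == e x y]].

Lemma Aut_graph_group_set (V : finType) (e : rel V) : group_set (Aut_graph e).
Proof.
apply/andP; split.
  by rewrite inE; apply/forallP=> x; apply/forallP=> y; rewrite !perm1.
apply/subsetP=> _ /imset2P[p q Hp Hq ->].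
rewrite !inE in Hp Hq *; apply/forallP=> x; apply/forallP=> y.
rewrite !permM (eqP (forallP (forallP Hq (p x)) (p y))).
exact: (forallP (forallP Hp x) y).
Qed.
Canonical Aut_graph_group (V : finType) (e : rel V) :=
  Group (Aut_graph_group_set e).

Definition q8_rmul (m : nat) (g : q8) (x : q8 * 'I_m) : q8 * 'I_m :=
  (x.1 * g, x.2).
Lemma q8_rmul_inj (m : nat) (g : q8) : injective (@q8_rmul m g).
Proof.
by move=> [y l] [y' l'] [/mulIg -> ->].
Qed.
Definition q8_rho (m : nat) (g : q8) : {perm q8 * 'I_m} :=
  perm (@q8_rmul_inj m g).

Definition is_mGRR (gT : finGroupType) (G : {group gT}) (m : nat)
    (V : finType) (e : rel V) : Prop :=
  [/\ symmetric e, irreflexive e,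
      (exists k, forall x : V, #|[set y | e x y]| = k)
    & exists A : {group {perm V}},
        [/\ A \subset Aut_graph e, A \isog G,
            (forall (a : {perm V}) (x : V), a \in A -> a x = x -> a = 1),
            #|[set orbit 'P A x | x : V]| = m
          & Aut_graph e \isog G]].

Definition has_mGRR (gT : finGroupType) (G : {group gT}) (m : nat) : Prop :=
  exists (V : finType) (e : rel V), is_mGRR G m e.

(* Main.v *)
Require Import Defs.
From HB Require Import structures.
From mathcomp Require Import all_boot all_fingroup zify.
Local Open Scope group_scope.

Definition Kl := [:: Pi; N1; Ni].
Definition Ml := [:: N1].
Definition El : seq q8 := [::].
Definition Jl := [:: Pj; Nj].
Definition Ci := [:: P1; Pi].
Definition Cij := [:: P1; Pi; Pj].
Definition intl (m a : nat) := if a == 0 then Kl else if a <= m-3 then Ml else if a == m-2 then El else Jl.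
Definition crs (m a : nat) := if a <= m-3 then Ci else Cij.
Definition adjN (m a b : nat) (s : q8) : bool :=
  if a == b then s \in intl m a else if b == a.+1 then s \in crs m a
  else if a == b.+1 then s^-1 \in crs m b else false.

Ltac simp_atoms :=
  repeat match goal with
  | |- context [(?x == ?y :> nat) && ((?z == ?w :> nat) && ?r)] =>
      have -> : (x == y) && ((z == w) && r) = false by
        apply/negbTE; apply/negP => /and3P [/eqP ? /eqP ? _]; lia
  | |- context [?x == ?y :> nat] =>
      (have -> : (x == y) = true by apply/eqP; lia) ||
      (have -> : (x == y) = false by apply/negbTE/eqP; lia)
  | |- context [?x <= ?y] =>
      (have -> : (x <= y) = true by lia) ||
      (have -> : (x <= y) = false by apply/negbTE; rewrite -ltnNge; lia)
  end.

Lemma Delta_adjN m (hm : 3 <= m) (x y : q8 * 'I_m) :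
  Delta_adj x y = adjN m x.2 y.2 (y.1 * x.1^-1).
Proof.
case: x y => [g [a ha]] [h [b hb]].
rewrite /Delta_adj /Delta_arc /adjN /intl /crs /=.
have E1 : forall g h : q8, (g \in [:: qi * h; qi ^+ 2 * h; qi ^+ 3 * h]) = (g * h^-1 \in [:: Pi; N1; Ni]) by do 2!case.
have E1' : forall g h : q8, (g * h^-1 \in [:: Pi; N1; Ni]) = (h * g^-1 \in [:: Pi; N1; Ni]) by do 2!case.
have E2 : forall g h : q8, (g == qi ^+ 2 * h) = (g * h^-1 == N1) by do 2!case.
have E2' : forall g h : q8, (g * h^-1 == N1) = (h * g^-1 == N1) by do 2!case.
have E3 : forall g h : q8, (g \in [:: qj * h; qj^-1 * h]) = (g * h^-1 \in [:: Pj; Nj]) by do 2!case.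
have E3' : forall g h : q8, (g * h^-1 \in [:: Pj; Nj]) = (h * g^-1 \in [:: Pj; Nj]) by do 2!case.
have E4 : forall g h : q8, (g \in [:: h; qi * h]) = (g * h^-1 \in [:: P1; Pi]) by do 2!case.
have E4' : forall g h : q8, (g * h^-1 \in [:: P1; Pi]) = ((h * g^-1)^-1 \in [:: P1; Pi]) by do 2!case.
have E5 : forall g h : q8, (g \in [:: h; qi * h; qj * h]) = (g * h^-1 \in [:: P1; Pi; Pj]) by do 2!case.
have E5' : forall g h : q8, (g * h^-1 \in [:: P1; Pi; Pj]) = ((h * g^-1)^-1 \in [:: P1; Pi; Pj]) by do 2!case.
rewrite (E1 h g) (E1 g h) (E2 h g) (E2 g h) (E3 h g) (E3 g h) (E4 h g) (E4 g h) (E5 h g) (E5 g h) (E1' g h) (E2' g h) (E3' g h) (E4' g h) (E5' g h).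
move: (h * g^-1) => s; clear -hm ha hb.
case: (eqVneq a b) => [<-|ne];
 repeat (case: ifP => [?|/negbT ?]); simp_atoms;
 by case: s; rewrite ?andbF; vm_compute.
Qed.
Set Implicit Arguments. Unset Strict Implicit.

Lemma mulg_ratio (g h c : q8) : (h * c) * (g * c)^-1 = h * g^-1.
Proof. by case: g; case: h; case: c. Qed.

Lemma adjR m (hm : 3 <= m) (g h : q8) (a b : 'I_m) :
  Delta_adj (g, a) (h, b) = adjN m a b (h * g^-1).
Proof. by rewrite Delta_adjN. Qed.

Lemma rho_in_aut m (hm : 3 <= m) c : q8_rho m c \in Aut_graph (@Delta_adj m).
Proof.
rewrite inE; apply/forallP => [[g a]]; apply/forallP => [[h b]].
by rewrite !permE /q8_rmul /= !adjR // mulg_ratio.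
Qed.

Lemma autP m (p : {perm q8 * 'I_m}) : p \in Aut_graph (@Delta_adj m) ->
  forall x y, Delta_adj (p x) (p y) = Delta_adj x y.
Proof. by rewrite inE => /forallP H x y; apply/eqP; exact: (forallP (H x) y). Qed.

Lemma adj_layer m (hm : 3 <= m) (x y : q8 * 'I_m) : Delta_adj x y ->
  (y.2 : nat) <= (x.2 : nat).+1 /\ (x.2 : nat) <= (y.2 : nat).+1.
Proof.
rewrite Delta_adjN // /adjN.
case: ifP => [/eqP -> _|_]; first lia.
case: ifP => [/eqP -> _|_]; first lia.
by case: ifP => [/eqP -> _|_ //]; lia.
Qed.

Lemma adj_down m (hm : 3 <= m) g (a b : 'I_m) : (a : nat) = (b : nat).+1 -> Delta_adj (g, a) (g, b).
Proof.
move=> hab; rewrite adjR // /adjN mulgV hab.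
have -> : ((b : nat).+1 == b) = false by lia.
have -> : ((b : nat) == (b : nat).+2) = false by lia.
by rewrite eqxx /crs; case: ifP.
Qed.

Lemma irr_adj m (hm : 3 <= m) (x : q8 * 'I_m) : Delta_adj x x = false.
Proof.
case: x => g a; rewrite adjR // /adjN mulgV eqxx /intl.
by repeat case: ifP.
Qed.

Definition adj2 (L1 L2 C : seq q8) (x y : bool) (s : q8) : bool :=
  if x == y then s \in (if x then L2 else L1) else if y then s \in C else s^-1 \in C.

Lemma adjN_2 m lo (x y : bool) s :
  adjN m (lo + x) (lo + y) s = adj2 (intl m lo) (intl m lo.+1) (crs m lo) x y s.
Proof.
case: x; case: y; rewrite /adjN /adj2 /= ?addn0 ?addn1 ?eqxx //.
  have -> : (lo.+1 == lo) = false by lia.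
  by have -> : (lo == lo.+2) = false by lia.
by have -> : (lo == lo.+1) = false by lia.
Qed.

Definition qlist := [:: P1; N1; Pi; Ni; Pj; Nj; Pk; Nk].
Lemma qlistP (g : q8) : g \in qlist. Proof. by case: g. Qed.
Definition blist := [:: false; true].
Lemma blistP (b : bool) : b \in blist. Proof. by case: b. Qed.

Definition K4check : bool :=
  all (fun L1 => all (fun L2 => all (fun C =>
  all (fun g1 => all (fun g2 => all (fun g3 =>
  all (fun x0 => all (fun x1 => all (fun x2 => all (fun x3 =>
    [&& adj2 L1 L2 C x0 x1 g1, adj2 L1 L2 C x0 x2 g2, adj2 L1 L2 C x0 x3 g3,
        adj2 L1 L2 C x1 x2 (g2 * g1^-1) & adj2 L1 L2 C x1 x3 (g3 * g1^-1)
      && adj2 L1 L2 C x2 x3 (g3 * g2^-1)] ==> (x0 == false) && (L1 == Kl))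
  blist) blist) blist) blist) qlist) qlist) qlist) [:: Ci; Cij]) [:: Ml; El; Jl]) [:: Kl; Ml; El; Jl].

Lemma K4check_ok : K4check. Proof. by vm_compute. Qed.

Lemma K4_fin L1 L2 C (g0 g1 g2 g3 : q8) (x0 x1 x2 x3 : bool) :
  L1 \in [:: Kl; Ml; El; Jl] -> L2 \in [:: Ml; El; Jl] -> C \in [:: Ci; Cij] ->
  adj2 L1 L2 C x0 x1 (g1 * g0^-1) -> adj2 L1 L2 C x0 x2 (g2 * g0^-1) ->
  adj2 L1 L2 C x0 x3 (g3 * g0^-1) -> adj2 L1 L2 C x1 x2 (g2 * g1^-1) ->
  adj2 L1 L2 C x1 x3 (g3 * g1^-1) -> adj2 L1 L2 C x2 x3 (g3 * g2^-1) ->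
  x0 = false /\ L1 = Kl.
Proof.
move=> h1 h2 h3 a1 a2 a3 a4 a5 a6.
have K := K4check_ok.
move: (allP K L1 h1) => {}K; move: (allP K L2 h2) => {}K; move: (allP K C h3) => {}K.
move: (allP K _ (qlistP (g1 * g0^-1))) => {}K.
move: (allP K _ (qlistP (g2 * g0^-1))) => {}K.
move: (allP K _ (qlistP (g3 * g0^-1))) => {}K.
move: (allP K _ (blistP x0)) => {}K; move: (allP K _ (blistP x1)) => {}K.
move: (allP K _ (blistP x2)) => {}K; move: (allP K _ (blistP x3)) => {}K.
rewrite !mulg_ratio a1 a2 a3 a4 a5 a6 /= in K.
by case/andP: K => /eqP -> /eqP ->.
Qed.

Definition inK4 {m} (v : q8 * 'I_m) := exists x y z,
  [/\ Delta_adj v x, Delta_adj v y, Delta_adj v z, Delta_adj x y & (Delta_adj x z /\ Delta_adj y z)].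

Lemma inK4_aut m (p : {perm q8 * 'I_m}) v :
  p \in Aut_graph (@Delta_adj m) -> inK4 v -> inK4 (p v).
Proof.
move=> /autP H [x [y [z [h1 h2 h3 h4 [h5 h6]]]]].
by exists (p x), (p y), (p z); rewrite !H.
Qed.

Lemma inK4_0 m (hm : 3 <= m) g (a : 'I_m) : (a : nat) = 0 -> inK4 (g, a).
Proof.
move=> ha; exists (Pi * g, a), (N1 * g, a), (Ni * g, a).
rewrite !adjR // /adjN eqxx /intl ha eqxx.
by case: g; vm_compute.
Qed.

Lemma intl_mem m a : intl m a \in [:: Kl; Ml; El; Jl].
Proof. by rewrite /intl; repeat case: ifP. Qed.
Lemma intlS_mem m a : intl m a.+1 \in [:: Ml; El; Jl].
Proof. by rewrite /intl; repeat case: ifP. Qed.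
Lemma crs_mem m a : crs m a \in [:: Ci; Cij].
Proof. by rewrite /crs; repeat case: ifP. Qed.
Lemma intl_K m a : intl m a = Kl -> a = 0.
Proof. by rewrite /intl; case: ifP => [/eqP //|_]; repeat case: ifP. Qed.

Lemma inK4_layer m (hm : 3 <= m) (v : q8 * 'I_m) : inK4 v -> (v.2 : nat) = 0.
Proof.
case: v => g0 [a0 h0] [[g1 [a1 h1]] [[g2 [a2 h2]] [[g3 [a3 h3]] [e1 e2 e3 e4 [e5 e6]]]]] /=.
move: (adj_layer hm e1) (adj_layer hm e2) (adj_layer hm e3)
      (adj_layer hm e4) (adj_layer hm e5) (adj_layer hm e6) => /= l1 l2 l3 l4 l5 l6.
rewrite !adjR //= in e1 e2 e3 e4 e5 e6.
set lo := minn (minn a0 a1) (minn a2 a3).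
have q0 : a0 = lo + (a0 != lo) by rewrite /lo; lia.
have q1 : a1 = lo + (a1 != lo) by rewrite /lo; lia.
have q2 : a2 = lo + (a2 != lo) by rewrite /lo; lia.
have q3 : a3 = lo + (a3 != lo) by rewrite /lo; lia.
rewrite q0 q1 q2 q3 !adjN_2 in e1 e2 e3 e4 e5 e6.
have [x0 LK] := K4_fin (intl_mem m lo) (intlS_mem m lo) (crs_mem m lo) e1 e2 e3 e4 e5 e6.
move: q0; rewrite x0 addn0 => ->.
exact: intl_K LK.
Qed.

Lemma aut_layer_gen m (hm : 3 <= m) k : forall (p : {perm q8 * 'I_m}),
  p \in Aut_graph (@Delta_adj m) -> forall v : q8 * 'I_m, (v.2 : nat) <= k -> ((p v).2 : nat) = v.2.
Proof.
elim: k => [|k IH] p hp v hv.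
  have v0 : (v.2 : nat) = 0 by lia.
  rewrite v0; apply: (inK4_layer hm); apply: inK4_aut hp _.
  by case: v v0 {hv} => g a; apply: inK4_0.
have [hk|hk] := leqP (v.2 : nat) k; first exact: IH.
case: v hv hk => g [l hl] /= hv hk.
have hkm : k < m by lia.
have el : l = k.+1 by lia.
have ad : Delta_adj (g, Ordinal hl) (g, Ordinal hkm) by apply: adj_down => //=.
have pu := IH p hp (g, Ordinal hkm) (leqnn k).
rewrite -(autP hp) in ad.
have [l1 l2] := adj_layer hm ad.
rewrite /= in pu.
have hpi : p^-1 \in Aut_graph (@Delta_adj m) by rewrite groupV.
have := IH _ hpi (p (g, Ordinal hl)).
rewrite permK /=.
move: l1 l2 pu.
set a := nat_of_ord (p (g, Ordinal hl)).2.
set b := nat_of_ord (p (g, Ordinal hkm)).2.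
move=> *.
have [hle|] := leqP a k; last by lia.
have := IH _ hpi (p (g, Ordinal hl)) hle.
rewrite permK /=; lia.
Qed.

Lemma aut_layer m (hm : 3 <= m) (p : {perm q8 * 'I_m}) :
  p \in Aut_graph (@Delta_adj m) -> forall v, (p v).2 = v.2.
Proof. by move=> hp v; apply: val_inj; apply: (aut_layer_gen hm hp (leqnn _)). Qed.

Lemma adjN_top m (hm : 3 <= m) (k k' : nat) s : k < 3 -> k' < 3 -> ~~ ((k == 0) && (k' == 0)) ->
  adjN m (m - 3 + k) (m - 3 + k') s = adjN 3 k k' s.
Proof.
case: k => [|[|[|k]]]; case: k' => [|[|[|k']]] //= _ _ _;
  rewrite /adjN /intl /crs; simp_atoms; by [].
Qed.

Definition compat (kw : nat) (gw u : q8) (t : nat * q8 * q8) : bool :=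
  let: (k, g, uk) := t in
  (((k == kw) && (g != gw)) ==> (uk != u)) &&
  (((k == 0) && (kw == 0)) || (adjN 3 kw k (uk * u^-1) == adjN 3 kw k (g * gw^-1))).

Definition cands (w : nat * q8) (K : seq (nat * q8 * q8)) :=
  [seq u <- qlist | all (compat w.1 w.2 u) K].

Fixpoint check (K : seq (nat * q8 * q8)) (ws : seq (nat * q8)) : bool :=
  match ws with
  | [::] => all (fun t => t.2 == t.1.2) K
  | w :: ws' => all (fun u => check ((w.1, w.2, u) :: K) ws') (cands w K)
  end.

Lemma check_sound (f : nat -> q8 -> q8) (c : q8)
  (Hadj : forall k k' g h, k < 3 -> k' < 3 -> ~~ ((k == 0) && (k' == 0)) ->
     adjN 3 k k' (f k' h * (f k g)^-1) = adjN 3 k k' (h * g^-1))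
  (Hinj : forall k g h, k < 3 -> f k g = f k h -> g = h) :
  forall ws K, check K ws -> all (fun w => w.1 < 3) ws ->
   (forall t, t \in K -> t.1.1 < 3 /\ f t.1.1 t.1.2 = t.2 * c) ->
   (forall w, w \in ws -> f w.1 w.2 = w.2 * c) /\ (forall t, t \in K -> t.2 = t.1.2).
Proof.
elim=> [|w ws IH] K /=.
  by move=> /allP H _ _; split=> // t /H /eqP.
case: w => kw gw /= hc /andP [hkw hws] HK.
set u := f kw gw * c^-1.
have fu : f kw gw = u * c by rewrite /u mulgKV.
have uc : u \in cands (kw, gw) K.
  rewrite mem_filter qlistP andbT; apply/allP => [[[k g] uk]] /HK /= [hk fk].
  apply/andP; split.
    apply/implyP => /andP [/eqP ekw ngw]; apply/eqP => euk.
    move: ngw; rewrite (Hinj kw g gw hkw) ?eqxx //.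
    by rewrite -ekw fk euk -fu ekw.
  case: (boolP ((k == 0) && (kw == 0))) => //= hn.
  have -> : uk * u^-1 = f k g * (f kw gw)^-1 by rewrite fk fu mulg_ratio.
  by rewrite Hadj // andbC.
have := allP hc u uc; move=> /IH /(_ hws) [].
  move=> t; rewrite inE => /orP [/eqP -> /=|/HK //]; by split.
move=> H1 H2; split.
  move=> w; rewrite inE => /orP [/eqP -> /=|/H1 //].
  by rewrite fu; congr (_ * _); apply: (H2 (kw, gw, u)); rewrite inE eqxx.
by move=> t ht; apply: H2; rewrite inE ht orbT.
Qed.

Definition order3 : seq (nat * q8) :=
  [:: (0%N, P1); (0%N, Ni); (2%N, P1); (2%N, Pi); (2%N, Pj); (1%N, Pi); (1%N, Ni); (1%N, Nj); (2%N, Nj); (1%N, Pk); (2%N, Pk); (2%N, Nk); (1%N, Pj); (1%N, Nk); (2%N, N1); (0%N, Pi); (0%N, N1); (2%N, Ni); (0%N, Pk); (0%N, Nj); (1%N, N1); (0%N, Pj); (0%N, Nk)].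

Lemma check_ok : check [:: (1%N, P1, P1)] order3.
Proof. by vm_compute. Qed.

Lemma top_rigid (f : nat -> q8 -> q8)
  (Hadj : forall k k' g h, k < 3 -> k' < 3 -> ~~ ((k == 0) && (k' == 0)) ->
     adjN 3 k k' (f k' h * (f k g)^-1) = adjN 3 k k' (h * g^-1))
  (Hinj : forall k g h, k < 3 -> f k g = f k h -> g = h) :
  forall k g, k < 3 -> f k g = g * f 1%N P1.
Proof.
have HK : forall t, t \in [:: (1%N, P1, P1)] -> t.1.1 < 3 /\ f t.1.1 t.1.2 = t.2 * f 1%N P1.
  by move=> t; rewrite inE => /eqP -> /=; rewrite mul1g.
have [H1 _] := check_sound Hadj Hinj check_ok (erefl true) HK.
move=> k g hk.
have : (k, g) \in (1%N, P1) :: order3.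
  by case: k hk => [|[|[|k]]] // _; case: g.
rewrite inE => /orP [/eqP [-> ->]|/H1 //]; by rewrite mul1g.
Qed.

Lemma down_fin (x y : q8) : x * y^-1 \in Ci -> (Pi * x) * y^-1 \in Ci -> y = x.
Proof. by case: x; case: y. Qed.

Lemma aut_is_rho m (hm : 3 <= m) (p : {perm q8 * 'I_m}) :
  p \in Aut_graph (@Delta_adj m) -> exists c, p = q8_rho m c.
Proof.
case: m hm p => [|[|[|n]]] // hm p hp.
have L := aut_layer hm hp.
have pv : forall v, p v = ((p v).1, v.2) by move=> v; rewrite -(L v); case: (p v).
pose f k g := (p (g, inord (n.+3 - 3 + k) : 'I_n.+3)).1.
have Hadj : forall k k' g h, k < 3 -> k' < 3 -> ~~ ((k == 0) && (k' == 0)) ->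
     adjN 3 k k' (f k' h * (f k g)^-1) = adjN 3 k k' (h * g^-1).
  move=> k k' g h hk hk' hn.
  have E := autP hp (g, inord (n.+3 - 3 + k)) (h, inord (n.+3 - 3 + k')).
  rewrite (pv (g, _)) (pv (h, _)) !adjR //= !inordK in E; try lia.
  by rewrite !adjN_top in E.
have Hinj : forall k g h, k < 3 -> f k g = f k h -> g = h.
  move=> k g h _ E.
  have : p (g, inord (n.+3 - 3 + k)) = p (h, inord (n.+3 - 3 + k)).
    by rewrite pv [RHS]pv /=; congr (_, _).
  by move/perm_inj => [].
have T := top_rigid Hadj Hinj.
set c := f 1%N P1 in T.
have D : forall d g (l : 'I_n.+3), d <= n -> (l : nat) = n - d -> (p (g, l)).1 = g * c.
  elim=> [|d IH] g l hd hl.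
    have -> : l = inord (n.+3 - 3 + 0) by apply: val_inj; rewrite /= inordK; lia.
    exact: (T 0%N g).
  have hl' : (l : nat).+1 < n.+3 by lia.
  set l' := Ordinal hl'.
  have IH' : forall g', (p (g', l')).1 = g' * c by move=> g'; apply: IH => /=; lia.
  have A1 : Delta_adj (g, l) (g, l').
    rewrite adjR //= /adjN mulgV.
    have -> : ((l : nat) == (l : nat).+1) = false by lia.
    by rewrite eqxx /crs; have -> : (l <= n.+3 - 3) = true by lia.
  have A2 : Delta_adj (g, l) (Pi * g, l').
    rewrite adjR //= /adjN.
    have -> : ((l : nat) == (l : nat).+1) = false by lia.
    rewrite eqxx /crs; have -> : (l <= n.+3 - 3) = true by lia.
    by rewrite mulgK.
  rewrite -(autP hp) (pv (g, l)) (pv (g, l')) adjR //= IH' /adjN in A1.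
  rewrite -(autP hp) (pv (g, l)) (pv (Pi * g, l')) adjR //= IH' /adjN in A2.
  have E1 : ((l : nat) == (l : nat).+1) = false by lia.
  have E2 : (l <= n.+3 - 3) = true by lia.
  rewrite E1 eqxx /crs E2 in A1; rewrite E1 eqxx /crs E2 in A2.
  by apply: down_fin; [exact: A1 | rewrite mulgA].
exists c; apply/permP => [[g l]]; rewrite permE /q8_rmul /= pv /=; congr (_, _).
have [hl|hl] := leqP l n; first by apply: (D (n - l)) => //; lia.
have [->|hl2] := eqVneq l (inord (n.+3 - 3 + 1)); first exact: (T 1%N g).
have [e|ne] := eqVneq (l : nat) n.+1.
  by move/eqP: hl2; case; apply: val_inj; rewrite /= inordK; lia.
have -> : l = inord (n.+3 - 3 + 2).
  by apply: val_inj; rewrite /= inordK; move: (ltn_ord l) ne; lia.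
exact: (T 2%N g).
Qed.

Lemma aut_eq m (hm : 3 <= m) : Aut_graph (@Delta_adj m) = [set q8_rho m g | g : q8].
Proof.
apply/eqP; rewrite eqEsubset; apply/andP; split; apply/subsetP => p.
  by move/(aut_is_rho hm) => [c ->]; apply: imset_f.
by case/imsetP => c _ ->; apply: rho_in_aut.
Qed.

Lemma cardL (L : seq q8) : uniq L -> \sum_(s : q8) (if s \in L then 1%N else 0%N) = size L.
Proof. by move=> u; rewrite -big_mkcond /= sum1_card; apply/card_uniqP. Qed.

Lemma cardL_inv (L : seq q8) : uniq L -> \sum_(s : q8) (if (s^-1)%g \in L then 1%N else 0%N) = size L.
Proof.
move=> u; rewrite (reindex_inj invg_inj) /=.
under eq_bigr do rewrite invgK.
exact: cardL.
Qed.

Lemma uniq_intl m a : uniq (intl m a). Proof. by rewrite /intl; repeat case: ifP. Qed.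
Lemma uniq_crs m a : uniq (crs m a). Proof. by rewrite /crs; repeat case: ifP. Qed.

Lemma inner_sum m a b : \sum_(s : q8) (if adjN m a b s then 1%N else 0%N) =
  (if a == b then size (intl m a) else if b == a.+1 then size (crs m a)
   else if a == b.+1 then size (crs m b) else 0)%N.
Proof.
rewrite /adjN; case: ifP => _; first exact/cardL/uniq_intl.
case: ifP => _; first exact/cardL/uniq_crs.
case: ifP => _; first exact/cardL_inv/uniq_crs.
by rewrite big1.
Qed.

Lemma sum_ind m t K : \sum_(b < m) (((b : nat) == t) * K)%N = ((t < m) * K)%N.
Proof.
case: (ltnP t m) => ht.
  rewrite (bigD1 (Ordinal ht)) //= eqxx big1 ?addn0 // => i /negbTE.
  by rewrite -val_eqE /= => ->.
by rewrite big1 // => i _; have -> : ((i : nat) == t) = false by move: (ltn_ord i); lia.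
Qed.

Lemma pw (x y I C1 : nat) (F : nat -> nat) :
  (if x == y then I else if y == x.+1 then C1 else if x == y.+1 then F y else 0) =
  (y == x) * I + (y == x.+1) * C1 + (y == x.-1) * ((0 < x) * F x.-1).
Proof.
case: (ltngtP x y) => [h|h|->].
- have [->|ne] := eqVneq y x.+1.
    by simp_atoms; lia.
  by simp_atoms; lia.
- have [->|ne] := eqVneq x y.+1.
    by simp_atoms; rewrite /=; lia.
  by case: x h ne => [|x] //= h ne; simp_atoms; lia.
- by case: y => [|y] /=; simp_atoms; lia.
Qed.

Lemma deg5 m (hm : 3 <= m) (x : q8 * 'I_m) : #|[set y | Delta_adj x y]| = 5%N.
Proof.
case: x => g a.
have -> : [set y | Delta_adj (g, a) y] = [set y : q8 * 'I_m | adjN m a y.2 (y.1 * g^-1)].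
  by apply/setP => [[h b]]; rewrite !inE adjR.
rewrite -sum1dep_card big_mkcond /=.
transitivity (\sum_(h : q8) \sum_(b : 'I_m) (if adjN m a b (h * g^-1)%g then 1%N else 0%N)).
  by rewrite pair_big.
rewrite exchange_big /=.
under eq_bigr => b _.
  rewrite (reindex_inj (mulIg g)) /=.
  under eq_bigr do rewrite mulgK.
  rewrite inner_sum.
  rewrite (pw _ _ _ _ (fun y => size (crs m y))).
  over.
rewrite !big_split /= !sum_ind.
move: (ltn_ord a) hm; rewrite /intl /crs.
repeat case: ifP => /= ?; lia.
Qed.

Lemma rho_morphic m : morphic [set: q8] (q8_rho m).
Proof.
apply/morphicP => x y _ _; apply/permP => v.
by rewrite permM !permE /q8_rmul /= mulgA.
Qed.

Lemma rho_isog m (hm : 3 <= m) : [set: q8] \isog [set q8_rho m g | g : q8].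
Proof.
pose f := morphm_morphism (rho_morphic m).
have injf : 'injm f.
  apply/injmP => x y _ _ /= E.
  have h0 : 0 < m by lia.
  have := congr1 (fun p : {perm q8 * 'I_m} => p (P1, Ordinal h0)) E.
  by rewrite /morphm !permE /q8_rmul /= !mul1g => [[]].
have -> : [set q8_rho m g | g : q8] = f @* [set: q8].
  rewrite morphimEdom; apply/setP => p; apply/imsetP/imsetP => [][g _ ->]; by exists g.
exact: sub_isog (subxx [set: q8]) injf.
Qed.

Definition lay m (l : 'I_m) := [set y : q8 * 'I_m | y.2 == l].

Lemma orbit_lay m (hm : 3 <= m) (x : q8 * 'I_m) :
  orbit 'P (Aut_graph (@Delta_adj m)) x = lay x.2.
Proof.
rewrite aut_eq //; apply/setP => y; rewrite inE; apply/imsetP/idP.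
  by move=> [a /imsetP [c _ ->] ->] /=; rewrite ?apermE permE.
move/eqP => e; exists (q8_rho m (x.1^-1 * y.1)); first exact: imset_f.
rewrite /= ?apermE permE /q8_rmul mulKVg -e; by case: y {e}.
Qed.

Lemma orbit_count m (hm : 3 <= m) :
  #|[set orbit 'P (Aut_graph (@Delta_adj m)) x | x : q8 * 'I_m]| = m.
Proof.
have -> : [set orbit 'P (Aut_graph (@Delta_adj m)) x | x : q8 * 'I_m] = (@lay m) @: [set: 'I_m].
  apply/setP => S; apply/imsetP/imsetP => [[x _ ->]|[l _ ->]].
    by exists x.2; rewrite ?inE ?orbit_lay.
  by exists (P1, l); rewrite ?inE ?orbit_lay.
rewrite card_imset ?cardsT ?card_ord //.
move=> l l' E.
have : (P1, l) \in lay l' by rewrite -E inE.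
by rewrite inE => /eqP.
Qed.

Lemma aut_isog m (hm : 3 <= m) : Aut_graph (@Delta_adj m) \isog [set: q8].
Proof. have := rho_isog hm; rewrite -aut_eq // => h; exact: isog_symr h. Qed.

Unset Implicit Arguments.

Theorem lemma4p11 (m : nat) (hm : 3 <= m) :
  Aut_graph (@Delta_adj m) = [set q8_rho m g | g : q8]
  /\ has_mGRR [set: q8]%G m.
Proof.
split; first exact: aut_eq.
exists (q8 * 'I_m)%type, (@Delta_adj m).
split.
- by move=> x y; rewrite /Delta_adj orbC.
- by move=> x; apply: irr_adj.
- by exists 5%N; apply: deg5.
exists (Aut_graph_group (@Delta_adj m)); split => //.
- exact: aut_isog.
- move=> a x; rewrite /= aut_eq // => /imsetP [c _ ->].
  rewrite permE /q8_rmul; case: x => g l [] E.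
  have -> : c = 1 by move: E; case: g; case: c.
  by apply/permP => v; rewrite perm1 permE /q8_rmul mulg1; case: v.
- exact: orbit_count.
- exact: aut_isog.
Qed.
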